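(* For every positive integer $m$, $$\sum_{t=0}^{\lfloor m/6\rfloor}\binom{2m}{m+6t}=\frac12\left(\frac{2^{2m-1}+1}{3}+3^{m-1}+\binom{2m}{m}\right).$$ *)

(* Defs.v *)
From mathcomp Require Import all_boot all_order all_algebra.

(* Main.v *)
Require Import Defs.
From mathcomp Require Import all_boot all_order all_algebra.
From mathcomp Require Import ring lra zify.
Import GRing.Theory Num.Theory.


Definition G n s := \sum_(0 <= k < n.+1) (k %% 6 == s %% 6) * 'C(n, k).

Lemma G_mod n s : G n (s %% 6) = G n s.
Proof. by rewrite /G modn_mod. Qed.

Lemma G_S n s : G n.+1 s.+1 = G n s.+1 + G n s.
Proof.
have E i : (i.+1 %% 6 == s.+1 %% 6) = (i %% 6 == s %% 6).
  by rewrite -!(add1n i) -(add1n s) eqn_modDl.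
rewrite /G (big_nat_recl n.+1) // (big_nat_recl n 0 (fun k => (k %% 6 == s.+1 %% 6) * 'C(n, k))) //.
under eq_bigr do rewrite binS mulnDr E.
rewrite big_split /= (big_nat_recr n 0 (fun i => (i %% 6 == s %% 6) * 'C(n, i.+1))) //= (bin_small (ltnSn n)) muln0 addn0.
rewrite !bin0 !addnA; congr (_ + _ + _).
by apply: eq_bigr => i _; rewrite E.
Qed.


Definition Cc (r : nat) : int := nth 0%R [:: 2; 1; -1; -2; -1; 1]%R (r %% 6).
Definition Dd (r : nat) : int := nth 0%R [:: 2; -1; -1; 2; -1; -1]%R (r %% 6).

Lemma Cc5 r : Cc (r + 5) = (Cc r - Cc r.+1)%R.
Proof.
rewrite /Cc -[r.+1]addn1 -(modnDml r 5) -(modnDml r 1).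
have : r %% 6 < 6 by rewrite ltn_pmod.
by case: (r %% 6) => [|[|[|[|[|[|q]]]]]].
Qed.

Lemma Dd5 r : Dd (r + 5) = (- Dd r - Dd r.+1)%R.
Proof.
rewrite /Dd -[r.+1]addn1 -(modnDml r 5) -(modnDml r 1).
have : r %% 6 < 6 by rewrite ltn_pmod.
by case: (r %% 6) => [|[|[|[|[|[|q]]]]]].
Qed.

Lemma G_base r : (6 * (G 2 (1 + r))%:Z = 4 + 3 * Cc r + Dd r)%R.
Proof.
rewrite -G_mod -modnDmr /Cc /Dd.
have : r %% 6 < 6 by rewrite ltn_pmod.
case: (r %% 6) => [|[|[|[|[|[|q]]]]]] // _; rewrite /G unlock //.
Qed.

Lemma G_shift n x : G n.+1 x = (G n x + G n (x + 5))%N.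
Proof.
have K k : G k (x + 6) = G k x by rewrite -G_mod modnDr G_mod.
by rewrite -K (addnS x 5) G_S -(addnS x 5) K.
Qed.

Lemma h_closed m r : 0 < m ->
  (6 * (G m.*2 (m + r))%:Z = 4 ^+ m + 3 ^+ m * Cc r + Dd r)%R.
Proof.
elim: m r => [//|m IH] r _.
case: m IH => [|m] IH; first by rewrite G_base.
rewrite doubleS addSn G_S (G_shift _ (m.+1 + r).+1) (G_shift _ (m.+1 + r)).
have G6 k x : G k (x.+1 + 5) = G k x by rewrite addSnnS -G_mod modnDr G_mod.
rewrite G6.
have H1 := IH r.+1 isT; have H2 := IH r isT; have H3 := IH (r + 5) isT.
rewrite addnS in H1; rewrite addnA in H3.
rewrite !PoszD !mulrDr H1 H2 H3 Cc5 Dd5 !exprS.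
ring.
Qed.


Lemma sum6 (F : nat -> nat) n :
  \sum_(0 <= j < n * 6) (j %% 6 == 0) * F j = \sum_(0 <= t < n) F (t * 6).
Proof.
elim: n => [|n IH]; first by rewrite !big_geq.
rewrite (big_nat_recr n 0 (fun t => F (t * 6))) //= -IH mulSn addnC (big_cat_nat (n := n * 6)) //=; last by lia.
congr (_ + _).
rewrite -{1}(add0n (n * 6)) big_addn addKn.
rewrite !big_nat_recr //= big_geq //.
rewrite !(addnC _ (n * 6)) !modnMDl /=.
by rewrite !mul0n !addn0 add0n mul1n.
Qed.

Lemma U_eq m :
  (2 * \sum_(0 <= t < (m %/ 6).+1) 'C(m.*2, m + 6 * t) = G m.*2 m + 'C(m.*2, m))%N.
Proof.
set U := \sum_(0 <= j < m.+1) (j %% 6 == 0) * 'C(m.*2, j + m).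
have E1 : \sum_(0 <= j < (m %/ 6).+1 * 6) (j %% 6 == 0) * 'C(m.*2, j + m) = U.
  rewrite (big_cat_nat (n := m.+1)) //=; last first.
    by have := ltn_ceil m (isT : 0 < 6).
  rewrite [X in _ + X = _]big1_seq ?addn0 //.
  move=> j /andP [_]; rewrite mem_index_iota => /andP [hj _].
  by rewrite bin_small ?muln0 //; lia.
have E2 : \sum_(0 <= t < (m %/ 6).+1) 'C(m.*2, m + 6 * t) = U.
  rewrite -E1 sum6; apply: eq_bigr => t _; by rewrite addnC mulnC.
rewrite E2.
set L := \sum_(0 <= i < m) (i.+1 %% 6 == 0) * 'C(m.*2, i.+1 + m).
have EU : U = ('C(m.*2, m) + L)%N.
  by rewrite /U big_nat_recl //= mul1n add0n.
have EG : G m.*2 m = (L + U)%N.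
  rewrite /G (big_cat_nat (n := m)) //=; last by lia.
  congr (_ + _).
    rewrite big_nat_rev /= add0n big_nat_cond [RHS]big_nat_cond.
    apply: eq_bigr => i /andP [/andP [_ hi] _].
    have hm : m = (m - i.+1 + i.+1)%N by lia.
    have -> : (i.+1 + m = m.*2 - (m - i.+1))%N by lia.
    rewrite bin_sub; last by lia.
    congr (_ * _); rewrite {2}hm -{1}(addn0 (m - i.+1)) eqn_modDl mod0n.
    by rewrite eq_sym.
  rewrite -{1}(add0n m) big_addn.
  have -> : ((m.*2).+1 - m = m.+1)%N by lia.
  apply: eq_bigr => i _.
  by rewrite -{2}(add0n m) eqn_modDr mod0n.
rewrite EG EU; lia.
Qed.

Local Open Scope ring_scope.

Theorem lemma4 (m : nat) (hm : (0 < m)%N) :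
  (\sum_(0 <= t < (m %/ 6).+1) ('C(m.*2, m + 6 * t))%:R : rat)
  = 2%:R^-1 * (((2 ^ (m.*2 - 1))%:R + 1) / 3%:R
                + (3 ^ (m - 1))%:R + ('C(m.*2, m))%:R).
Proof.
rewrite -natr_sum.
have HU := U_eq m.
have HZ := h_closed m 0 hm.
rewrite addn0 /Cc /Dd /= in HZ.
have HQ := congr1 (fun z : int => z%:~R : rat) HZ.
rewrite /= !rmorphD !rmorphM /= !rmorphXn /= in HQ.
clear HZ; case: m hm HU HQ => // k _ HU HQ.
have -> : ((k.+1).*2 - 1 = (k.*2).+1)%N by lia.
rewrite subSS subn0.
set g := G _ _ in HQ HU.
rewrite (_ : (g%:Z)%:~R = g%:R) in HQ; last by rewrite -pmulrn.
have HU' := congr1 (fun n : nat => n%:R : rat) HU.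
rewrite /= natrD natrM in HU'.
have e4 : (4 : rat) ^+ k.+1 = 2 * (2 ^ k.*2.+1)%:R.
  by rewrite natrX !exprS -mul2n exprM; ring.
have e3 : (3 : rat) ^+ k.+1 = 3 * (3 ^ k)%:R.
  by rewrite natrX exprS.
set S := (\sum_(_ <= _ < _) _)%N in HU' *.
rewrite e4 e3 in HQ.
set a := (2 ^ k.*2.+1)%:R in HQ *. set b := (3 ^ k)%:R in HQ *.
lra.
Qed.
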